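(* Let $x_0,x_1,\dots,x_N\in\mathbb{R}$ be the features of a time series and let $\|\cdot\|$ be a norm. Let $\mathcal{D}$ be a probability distribution with support $[0,1)$ and $e=\mathbb{E}[\mathcal{D}]$ its mean. Let $\lambda_1,\dots,\lambda_N$ be drawn independently from $\mathcal{D}$, and let $\lambda_0$ be a dummy value. Define recursively $x_{0,\lambda_0}=x_0$ and $x_{i,\lambda_i}=(1-\lambda_i)x_i+\lambda_i x_{i-1,\lambda_{i-1}}$ for $i\ge 1$. For $k\in[0:N]$ let $g(\lambda_k)=(1-\lambda_k)(1-\delta_{0k})+(1-\operatorname{sign}(k))$, where $\delta_{ab}=1$ if $a=b$ and $0$ otherwise, and $\operatorname{sign}(0)=0$, $\operatorname{sign}(t)=1$ for $t>0$, $\operatorname{sign}(t)=-1$ for $t<0$. Let $m=\max_{i\in[0:N]}\|x_i\|$ and $m'=\max_{i\in[1:N]}\|x_i-x_{i-1}\|$. Then for every $n\in[0:N]$: (1) $x_{n,\lambda_n}=\sum_{k=0}^{n}\Big(\prod_{i=k+1}^{n}\lambda_i\Big)g(\lambda_k)\,x_k$ (an empty product equals $1$); (2) $\big\|\mathbb{E}_{\lambda_1,\dots,\lambda_n}[x_{n,\lambda_n}-x_n]\big\|\le\min\{3em,\ \tfrac{e}{1-e}m',\ Nem'\}$, and, for every fixed value of $\lambda_n\in[0,1)$, $\mathbb{E}_{\lambda_1,\dots,\lambda_{n-1}}\big[\|x_{n,\lambda_n}-x_n\|\big]\le 2\lambda_n m$.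
   Context: This is the Recursive Interpolation Method (RIM) for time series augmentation: the augmented features $x_{i,\lambda_i}$ are obtained by recursively taking convex combinations of the current original feature with the previous augmented feature. *)

(* Defs.v *)
From HB Require Import structures.
From mathcomp Require Import all_boot all_order all_algebra.
From mathcomp Require Import all_classical all_reals all_analysis.
Set Implicit Arguments. Unset Strict Implicit. Unset Printing Implicit Defensive.
Import Order.TTheory GRing.Theory Num.Theory.
Local Open Scope ring_scope.

Section RIM.
Variable R : realType.

Definition is_norm (nu : R -> R) : Prop :=
  [/\ (forall x, 0 <= nu x),
      (forall x, nu x = 0 -> x = 0),
      (forall a x, nu (a * x) = `|a| * nu x) &
      (forall x y, nu (x + y) <= nu x + nu y)].

(* x_{n,lambda_n}: recursive interpolation; lam 0 is a dummy value *)
Fixpoint rim (x lam : nat -> R) (n : nat) : R :=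
  match n with
  | 0 => x 0%N
  | k.+1 => (1 - lam k.+1) * x k.+1 + lam k.+1 * rim x lam k
  end.

Definition kdelta (a b : nat) : R := (a == b)%:R.

Definition gfun (lamk : R) (k : nat) : R :=
  (1 - lamk) * (1 - kdelta 0 k) + (1 - Num.sg (k%:R : R)).

Definition upd (lam : nat -> R) (i : nat) (t : R) : nat -> R :=
  fun j => if j == i then t else lam j.

(* Expectation over lambda_1, ..., lambda_n drawn i.i.d. from D, written as the
   iterated integral; the remaining coordinates are taken from lam. *)
Fixpoint Eiid (D : probability R R) (n : nat) (F : (nat -> R) -> R)
  (lam : nat -> R) : R :=
  match n with
  | 0 => F lam
  | k.+1 => Eiid D k (fun l => Rintegral D setT (fun t => F (upd l k.+1 t))) lam
  end.

Definition meanD (D : probability R R) : R := Rintegral D setT (fun t => t).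

End RIM.

(* Main.v *)
Require Import Defs.
From HB Require Import structures.
From mathcomp Require Import all_boot all_order all_algebra.
From mathcomp Require Import all_classical all_reals all_analysis.
Import Order.TTheory GRing.Theory Num.Theory.
Local Open Scope ring_scope.
From mathcomp Require Import ring lra.

Module RIMHelpers.
Import HBNNSimple.
Set Implicit Arguments. Unset Strict Implicit.
Local Open Scope classical_set_scope.

Section H.
Variable R : realType.
Variable D : probability R R.
Lemma gfun0 (l : R) : gfun l 0 = 1.
Proof. by rewrite /gfun /kdelta eqxx sgr0 /=; ring. Qed.

Lemma gfunS (l : R) k : gfun l k.+1 = 1 - l.
Proof. by rewrite /gfun /kdelta /= gtr0_sg ?ltr0Sn //; ring. Qed.

Lemma rim_sum (x lam : nat -> R) n : rim x lam n =
  \sum_(0 <= k < n.+1) (\prod_(k.+1 <= i < n.+1) lam i) * gfun (lam k) k * x k.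
Proof.
elim: n => [|n IHn].
  by rewrite big_nat1 big_geq // gfun0 /=; ring.
rewrite big_nat_recr //= (big_geq (leqnn n.+2)) mul1r gfunS.
have -> : \sum_(0 <= k < n.+1)
    (\prod_(k.+1 <= i < n.+2) lam i) * gfun (lam k) k * x k =
    lam n.+1 * \sum_(0 <= k < n.+1)
    (\prod_(k.+1 <= i < n.+1) lam i) * gfun (lam k) k * x k.
  rewrite big_distrr; apply: eq_big_nat => k /andP[_ kn].
  by rewrite big_nat_recr //=; ring.
by rewrite -IHn; ring.
Qed.

Lemma rim_upd (x l : nat -> R) j t k : (k < j)%N -> rim x (upd l j t) k = rim x l k.
Proof.
elim: k => [//|k IHk] kj /=.
by rewrite IHk ?(ltnW kj) // /upd eq_sym (gtn_eqF kj).
Qed.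

Lemma rim_updS (x l : nat -> R) k t :
  rim x (upd l k.+1 t) k.+1 = (1 - t) * x k.+1 + t * rim x l k.
Proof. by rewrite /= rim_upd // /upd eqxx. Qed.

Lemma EiidS k F (lam : nat -> R) :
  Eiid D k.+1 F lam = Eiid D k (fun l => \int[D]_(t in setT) F (upd l k.+1 t)) lam.
Proof. by []. Qed.

Lemma lemaxl (x y : R) : x <= Num.max x y.
Proof. by rewrite le_max lexx. Qed.
Lemma lemaxr (x y : R) : y <= Num.max x y.
Proof. by rewrite le_max lexx orbT. Qed.
Lemma lemax_trans (x y z : R) : x <= z -> x <= Num.max y z.
Proof. by move=> h; apply: le_trans h (lemaxr _ _). Qed.

Lemma bigmax_ub (F : nat -> R) a b i : (a <= i < b)%N ->
  F i <= \big[Num.max/0]_(a <= j < b) F j.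
Proof.
move=> /andP[ai ib].
have [k ik] : exists k, i = (a + k)%N by exists (i - a)%N; rewrite subnKC.
subst i; clear ai; elim: k a ib => [|k IH] a ib.
  by rewrite addn0 in ib *; rewrite big_ltn //; apply: lemaxl.
have ab : (a < b)%N by apply: leq_ltn_trans ib; rewrite leq_addr.
rewrite big_ltn //; apply: lemax_trans.
by rewrite -addSnnS; apply: IH; rewrite addSnnS.
Qed.

Lemma bigmax_ge0 (F : nat -> R) a b : 0 <= \big[Num.max/0]_(a <= j < b) F j.
Proof. by elim/big_rec: _ => // i y _ Hy; apply: lemax_trans. Qed.

Hypothesis DA : D `[0%R, 1%R[%classic = 1%E.

Lemma intL (f : R -> R) C : 0 <= C -> (forall t, 0 <= f t) ->
  (forall t, 0 <= t < 1 -> f t <= C) ->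
  (\int[D]_(t in setT) (f t)%:E <= C%:E)%E.
Proof.
move=> C0 f0 fC.
rewrite ge0_integralTE; last by move=> t; rewrite lee_fin.
apply: ge_ereal_sup => _ [h /= hf <-].
rewrite -integralT_nnsfun.
have H : {ae D, forall x, setT x -> ((h x)%:E <= (cst C%:E) x)%E}.
  exists (~` `[0%R, 1%R[%classic); split.
  - by apply: measurableC; exact: measurable_itv.
  - by rewrite probability_setC ?DA ?subee //; exact: measurable_itv.
  move=> t /= Hn Ht; apply: Hn => _.
  have Ht' : 0 <= t < 1 by move: Ht; rewrite /= in_itv.
  apply: (le_trans (hf t)); rewrite lee_fin; exact: fC.
have := @ae_ge0_le_integral _ _ _ D setT measurableT (fun x => (h x)%:E) (cst C%:E).
move=> /(_ _ _ _ _ H) X; rewrite -[C%:E]mule1 -(probability_setT D) -integral_cst //; apply: X.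
- by move=> x _; rewrite lee_fin.
- by apply/measurable_realfun.measurable_EFinP; exact: measurable_funPT.
- by move=> x _; rewrite lee_fin.
- exact: measurable_cst.
Qed.

Lemma RL (f : R -> R) C : 0 <= C -> (forall t, 0 <= f t) ->
  (forall t, 0 <= t < 1 -> f t <= C) ->
  \int[D]_(t in setT) f t <= C.
Proof.
move=> C0 f0 fC; have H := @intL f C C0 f0 fC.
have H0 : (0 <= \int[D]_(t in setT) (f t)%:E)%E.
  by apply: integral_ge0 => t _; rewrite lee_fin.
rewrite /Rintegral; move: H0 H.
by case: (\int[D]_(t in setT) (f t)%:E)%E => [r||] //=; rewrite lee_fin.
Qed.

Lemma RL0 (f : R -> R) : (forall t, 0 <= f t) ->
  (forall t, 0 <= t < 1 -> f t = 0) ->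
  \int[D]_(t in setT) f t = 0.
Proof.
move=> f0 fC; apply/eqP; rewrite eq_le; apply/andP; split.
  by apply: RL => // t /fC ->.
by apply: Rintegral_ge0 => t _.
Qed.

Lemma int_id : D.-integrable setT (EFin \o (fun t : R => t)).
Proof.
apply/integrableP; split.
  by apply/measurable_realfun.measurable_EFinP; exact: measurable_id.
apply: (le_lt_trans _ (ltey 1%:E)).
have := @intL (fun t => `|t|) 1 ler01 (fun t => normr_ge0 t).
move=> X; apply: le_trans (X _); first by [].
by move=> t /andP[t0 t1]; rewrite ger0_norm // ltW.
Qed.

Lemma int_lin (b : R) : D.-integrable setT (EFin \o (fun t : R => b * t)).
Proof.
have -> : EFin \o (fun t : R => b * t) = (fun t => b%:E * (EFin \o (fun t : R => t)) t)%E.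
  by apply: funext => t /=; rewrite EFinM.
exact: integrableZl int_id.
Qed.

Lemma int_cst (a : R) : D.-integrable setT (EFin \o (fun t : R => a)).
Proof. exact: finite_measure_integrable_cst. Qed.

Lemma Iaff (a b : R) :
  \int[D]_(t in setT) (a + b * t) = a + b * meanD D.
Proof.
rewrite RintegralD //; [|exact: int_cst|exact: int_lin].
rewrite Rintegral_cst // [fine _](_ : _ = 1); last exact: (congr1 fine (probability_setT D)).
rewrite mulr1 RintegralZl //.
exact: int_id.
Qed.


Lemma int_norm : D.-integrable setT (EFin \o (fun t : R => `|t|)).
Proof. exact: (integrable_norm int_id). Qed.

Lemma mean_ge0 : 0 <= meanD D.
Proof.
rewrite /meanD.
have -> : (fun t : R => t) = (fun t => `|t| - (`|t| - t)).
  by apply: funext => t; rewrite opprB addrCA subrr addr0.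
rewrite RintegralB //; [|exact: int_norm|].
  rewrite (@RL0 (fun t => `|t| - t)) ?subr0.
  - by apply: Rintegral_ge0 => t _.
  - by move=> t; rewrite subr_ge0 ler_norm.
  - by move=> t /andP[t0 _]; rewrite ger0_norm // subrr.
apply: (eq_integrable measurableT _ _ _ (integrableB measurableT int_norm int_id)).
by move=> t _ /=; rewrite EFinB.
Qed.

Lemma mean_lt1 : meanD D < 1.
Proof.
rewrite ltNge; apply/negP => e1.
pose f := (fun t : R => 1 - t) \max (cst 0).
have mf : measurable_fun setT f.
  apply: measurable_realfun.measurable_maxr; last exact: measurable_cst.
  apply: measurable_realfun.measurable_funB; [exact: measurable_cst|exact: measurable_id].
have f0 t : 0 <= f t by rewrite /f /= le_max lexx orbT.
have fA t : 0 <= t < 1 -> f t = 1 - t.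
  by move=> /andP[_ t1]; rewrite /f /= max_l // subr_ge0 ltW.
have intf : D.-integrable setT (EFin \o f).
  apply/integrableP; split; first by apply/measurable_realfun.measurable_EFinP.
  apply: (le_lt_trans _ (ltey 1%:E)).
  have := @intL (fun t => `|f t|) 1 ler01 (fun t => normr_ge0 _).
  move=> X; apply: le_trans (X _); first by [].
  move=> t /andP[t0 t1]; rewrite ger0_norm // fA ?t0 ?t1 //.
  by rewrite lerBlDr lerDl.
have int1 : D.-integrable setT (EFin \o (fun t : R => 1 - t)).
  have -> : (fun t : R => 1 - t) = (fun t => 1 + (-1) * t).
    by apply: funext => t; rewrite mulN1r.
  apply: (eq_integrable measurableT _ _ _ (integrableD measurableT (int_cst 1) (int_lin (-1)))).
  by move=> t _ /=; rewrite EFinD.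
have If : \int[D]_(t in setT) f t = 1 - meanD D.
  have -> : f = (fun t => (1 + (-1) * t) + (f t - (1 - t))).
    by apply: funext => t; rewrite mulN1r addrCA subrr addr0.
  rewrite RintegralD //; last 2 first.
  - apply: (eq_integrable measurableT _ _ _ (integrableD measurableT (int_cst 1) (int_lin (-1)))).
    by move=> t _ /=; rewrite EFinD.
  - apply: (eq_integrable measurableT _ _ _ (integrableB measurableT intf int1)).
    by move=> t _ /=; rewrite EFinB.
  rewrite Iaff (@RL0 (fun t => f t - (1 - t))) ?addr0 ?mulN1r //.
  - by move=> t; rewrite subr_ge0 /f /= le_max lexx.
  - by move=> t /fA ->; rewrite subrr.
have If0 : \int[D]_(t in setT) f t = 0.
  apply/eqP; rewrite eq_le; apply/andP; split.
    by rewrite If subr_le0.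
  exact: Rintegral_ge0.
have Ie0 : (\int[D]_(t in setT) `|(EFin \o f) t| = 0)%E.
  have H1 : (\int[D]_(t in setT) (EFin \o f) t)%E \is a fin_num.
    exact: integrable_fin_num intf.
  rewrite (eq_integral (EFin \o f)); last first.
    by move=> t _; rewrite /= ger0_norm.
  by rewrite -(fineK H1); move: If0; rewrite /Rintegral => ->.
have [N [mN N0 sN]] := (ae_eq_integral_abs D measurableT
   (proj2 (measurable_realfun.measurable_EFinP _ _) mf)).1 Ie0.
have : D `[0%R, 1%R[%classic = 0%E.
  apply: (subset_measure0 (measurable_itv _) mN) => //.
  move=> t At; apply: sN => /= H.
  have /andP[t0 t1] : 0 <= t < 1 by move: At; rewrite /= in_itv.
  have := H Logic.I; rewrite /= fA ?t0 ?t1 // => /eqP.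
  by rewrite eqe subr_eq0 eq_sym (lt_eqF t1).
by rewrite DA => /eqP; rewrite onee_eq0.
Qed.


Section Norm.
Variable nu : R -> R.
Hypothesis hnu : is_norm nu.

Lemma nu_ge0 y : 0 <= nu y. Proof. by case: hnu. Qed.
Lemma nuM a y : nu (a * y) = `|a| * nu y. Proof. by case: hnu. Qed.
Lemma nuD y z : nu (y + z) <= nu y + nu z. Proof. by case: hnu. Qed.
Lemma nuN y : nu (- y) = nu y.
Proof. by rewrite -mulN1r nuM normrN normr1 mul1r. Qed.
Lemma nu0 : nu 0 = 0.
Proof. by have := nuM 0 0; rewrite mul0r normr0 mul0r. Qed.

Lemma rim_le (x l : nat -> R) m j :
  (forall i, (i <= j)%N -> nu (x i) <= m) ->
  (forall i, (1 <= i <= j)%N -> 0 <= l i <= 1) -> nu (rim x l j) <= m.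
Proof.
elim: j => [|j IH] hx hl /=; first exact: hx.
have /andP[l0 l1] : 0 <= l j.+1 <= 1 by apply: hl; rewrite /= leqnn.
have hr : nu (rim x l j) <= m.
  apply: IH => [i ij|i /andP[i1 ij]].
    by apply: hx; exact: (leq_trans ij (leqnSn j)).
  by apply: hl; rewrite i1 /=; exact: (leq_trans ij (leqnSn j)).
have hxj := hx j.+1 (leqnn _).
apply: (le_trans (nuD _ _)); rewrite !nuM ger0_norm ?subr_ge0 // ger0_norm //.
have := nu_ge0 (x j.+1); have := nu_ge0 (rim x l j); nra.
Qed.

End Norm.

Lemma Eaff (x : nat -> R) k : forall a b lam,
  Eiid D k (fun l => a + b * rim x l k) lam = a + b * rim x (fun _ => meanD D) k.
Proof.
elim: k => [|k IH] a b lam; first by [].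
rewrite EiidS (_ : (fun l => _) = (fun l => (a + b * (1 - meanD D) * x k.+1) +
    (b * meanD D) * rim x l k)); last first.
  apply: funext => l; cbv beta.
  rewrite (_ : (fun t => _) = (fun t => (a + b * x k.+1) +
      (b * (rim x l k - x k.+1)) * t)); last first.
    by apply: funext => t; rewrite rim_updS; ring.
  by rewrite Iaff; ring.
by rewrite IH /=; ring.
Qed.

Lemma Ebound k : forall F C lam, 0 <= C -> (forall l, 0 <= F l) ->
  (forall l, (forall i, (1 <= i <= k)%N -> 0 <= l i < 1) -> F l <= C) ->
  0 <= Eiid D k F lam <= C.
Proof.
elim: k => [|k IH] F C lam C0 F0 FC.
  by rewrite /= F0 FC // => i /andP[i1 i0]; move: (leq_trans i1 i0).
rewrite EiidS; apply: IH => // l.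
  exact: Rintegral_ge0.
move=> hl; apply: RL => // t ht; apply: FC => i /andP[i1 ik].
rewrite /upd; case: eqP => // /eqP ne; apply: hl.
by rewrite i1 /= -ltnS ltn_neqAle ne ik.
Qed.

End H.
End RIMHelpers.
Import RIMHelpers.

Theorem theorem1 (R : realType) (N : nat) (x : nat -> R) (nu : R -> R)
  (D : probability R R) :
  is_norm nu ->
  D `[0%R, 1%R[%classic = 1%E ->
  let e := meanD D in
  let m := \big[Num.max/0]_(0 <= i < N.+1) nu (x i) in
  let m' := \big[Num.max/0]_(1 <= i < N.+1) nu (x i - x i.-1) in
  forall n : nat, (n <= N)%N ->
    (forall lam : nat -> R,
       (forall i, (1 <= i <= N)%N -> 0 <= lam i < 1) ->
       rim x lam n =
       \sum_(0 <= k < n.+1)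
          (\prod_(k.+1 <= i < n.+1) lam i) * gfun (lam k) k * x k)
    /\
    (forall lam : nat -> R,
       nu (Eiid D n (fun l => rim x l n - x n) lam)
       <= Num.min (3 * e * m) (Num.min (e / (1 - e) * m') (N%:R * e * m')))
    /\
    (forall (lam : nat -> R) (t : R), 0 <= t < 1 ->
       Eiid D n.-1 (fun l => nu (rim x (upd l n t) n - x n)) lam
       <= 2 * t * m).
Proof.
move=> hnu DA e m m' n nN.
have e0 : 0 <= e := mean_ge0 DA.
have e1 : e < 1 := mean_lt1 DA.
have nu0 := nu0 hnu.
have nuge0 := nu_ge0 hnu.
have mx i : (i <= N)%N -> nu (x i) <= m.
  by move=> iN; apply: (@bigmax_ub R (fun i => nu (x i))); rewrite /= ltnS iN.
have m0 : 0 <= m := bigmax_ge0 _ _ _.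
have m'x i : (i < N)%N -> nu (x i - x i.+1) <= m'.
  move=> iN; rewrite -(nuN hnu) opprB.
  exact: (@bigmax_ub R (fun i => nu (x i - x i.-1)) 1 N.+1 i.+1).
have m'0 : 0 <= m' := bigmax_ge0 _ _ _.
have yb j : (j <= N)%N -> nu (rim x (fun _ => e) j) <= m.
  move=> jN; apply: rim_le => // i ij; first exact: mx (leq_trans ij jN).
  by rewrite e0 ltW.
split; first by move=> lam _; exact: rim_sum.
split.
  move=> lam.
  rewrite (_ : (fun l => rim x l n - x n) = (fun l => - x n + 1 * rim x l n));
    last by apply: funext => l; ring.
  rewrite (Eaff DA) -/e mul1r addrC.
  set y := rim x (fun _ => e).
  have dS k : y k.+1 - x k.+1 = e * ((y k - x k) + (x k - x k.+1)).
    by rewrite /y /=; ring.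
  rewrite le_min; apply/andP; split.
    case: n nN => [|k] kN; first by rewrite /y /= subrr nu0; nra.
    rewrite dS (_ : (y k - x k) + (x k - x k.+1) = y k - x k.+1); last by ring.
    rewrite (nuM hnu) ger0_norm //.
    have h1 := nuD hnu (y k) (- x k.+1); rewrite (nuN hnu) in h1.
    have h2 : nu (y k) <= m := yb k (ltnW kN); have h3 := mx _ kN.
    have := nuge0 (y k - x k.+1); nra.
  have step k : (k < N)%N ->
      nu (y k.+1 - x k.+1) <= e * (nu (y k - x k) + m').
    move=> kN; rewrite dS (nuM hnu) ger0_norm //; apply: ler_wpM2l => //.
    by apply: le_trans (nuD hnu _ _) _; rewrite lerD2l m'x.
  rewrite le_min; apply/andP; split.
    set q := e / (1 - e).
    have hq : e * q + e = q by rewrite /q; field; rewrite subr_eq0 eq_sym lt_eqF.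
    have q0 : 0 <= q by rewrite /q divr_ge0 // subr_ge0 ltW.
    suff : forall k, (k <= N)%N -> nu (y k - x k) <= q * m' by apply.
    elim=> [|k IH] kN; first by rewrite /y /= subrr nu0; nra.
    apply: le_trans (step k kN) _.
    have := IH (ltnW kN); have := nuge0 (y k - x k); nra.
  have NR : n%:R <= N%:R :> R by rewrite ler_nat.
  apply: le_trans (_ : n%:R * e * m' <= _); last first.
    by apply: ler_wpM2r => //; apply: ler_wpM2r.
  elim: n nN {NR} => [|k IH] kN; first by rewrite /y /= subrr nu0 mul0r mul0r.
  apply: le_trans (step k kN) _.
  have := IH (ltnW kN); have := nuge0 (y k - x k); rewrite -natr1; nra.
move=> lam t /andP[t0 t1].
case: n nN => [|k] kN.
  by rewrite /= subrr nu0; nra.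
have C0 : 0 <= 2 * t * m by rewrite mulr_ge0 // mulr_ge0.
suff FC : forall l : nat -> R, (forall i, (1 <= i <= k)%N -> 0 <= l i < 1) ->
    nu (rim x (upd l k.+1 t) k.+1 - x k.+1) <= 2 * t * m.
  by have /andP[_ Hb] := Ebound DA lam C0 (fun l => nuge0 _) FC.
move=> l hl; rewrite rim_updS.
rewrite (_ : (1 - t) * x k.+1 + t * rim x l k - x k.+1 = t * (rim x l k - x k.+1));
  last by ring.
rewrite (nuM hnu) ger0_norm //.
have h1 := nuD hnu (rim x l k) (- x k.+1); rewrite (nuN hnu) in h1.
have h2 : nu (rim x l k) <= m.
  apply: rim_le => // i ik; first exact: mx (leq_trans ik (ltnW kN)).
  have /andP[a b] := hl i ik; by rewrite a ltW.
have h3 := mx _ kN.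
have := nuge0 (rim x l k - x k.+1); nra.
Qed.
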